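(* Let $q=3^k$ for a positive integer $k$, let $n$ be a positive integer and $j\in\{0,1,\dots,n\}$. Let $A\subseteq \mathbb{F}_q^n$ be a set such that every element of $A$ has exactly $j$ coordinates equal to zero, and such that for any three distinct elements $x,y,z\in A$ we have $xy+yz+zx\neq 0$ in $\mathbb{F}_q^n$ (coordinatewise products). Define $$P(x,y,z)=\prod_{i=1}^{n} \left(1-(x_iy_i+y_iz_i+z_ix_i)^{q-1}\right)\in\mathbb{F}_q.$$ Then for $x,y,z\in A$, $P(x,y,z)\neq 0$ if and only if $x=y=z$.
   Context: For $x\in\mathbb{F}_q^n$, $x_i$ denotes its $i$-th coordinate. *)

(* Defs.v *)
From HB Require Import structures.
From mathcomp Require Import all_boot all_order all_algebra.
Set Implicit Arguments. Unset Strict Implicit. Unset Printing Implicit Defensive.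
Import GRing.Theory.
Local Open Scope ring_scope.

Definition vmul (F : finFieldType) (n : nat) (x y : {ffun 'I_n -> F}) :
  {ffun 'I_n -> F} := [ffun i => x i * y i].

Definition nzeros (F : finFieldType) (n : nat) (x : {ffun 'I_n -> F}) : nat :=
  #|[set i | x i == 0]|.

Definition Ppoly (F : finFieldType) (n q : nat) (x y z : {ffun 'I_n -> F}) : F :=
  \prod_(i < n) (1 - (x i * y i + y i * z i + z i * x i) ^+ (q - 1)).

(* Main.v *)
Require Import Defs.
From HB Require Import structures.
From mathcomp Require Import all_boot all_order all_algebra finfield.
From mathcomp Require Import ring.
Import GRing.Theory.
Local Open Scope ring_scope.

Lemma fexp_nz (F : finFieldType) (a : F) : a != 0 -> a ^+ (#|F| - 1)%N = 1.
Proof.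
move=> a0; have h1 := finNzRing_gt1 F.
have e : #|F| = (#|F| - 1).+1 by rewrite subn1 prednK // ltnW.
have := expf_card a; rewrite {1}e exprS => h.
by apply: (mulfI a0); rewrite h mulr1.
Qed.

Lemma key_eq (F : finFieldType) (n : nat) (x z : {ffun 'I_n -> F}) :
  (3%:R : F) = 0 ->
  (forall i, x i * x i + x i * z i + z i * x i = 0) ->
  nzeros x = nzeros z -> x = z.
Proof.
move=> h3 hs hc.
have hi i : x i = 0 \/ x i = z i.
  have : x i * (x i - z i) = 0.
    rewrite -(hs i).
    transitivity (x i * x i + x i * z i + z i * x i - (x i * z i) * 3%:R).
      ring.
    by rewrite h3 mulr0 subr0.
  move/eqP; rewrite mulf_eq0 subr_eq0 => /orP[/eqP|/eqP]; by [left|right].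
have sub : [set i | z i == 0] \subset [set i | x i == 0].
  apply/subsetP=> i; rewrite !inE => /eqP zi.
  by case: (hi i) => [->|->]; rewrite ?zi.
have : [set i | z i == 0] == [set i | x i == 0].
  by rewrite eqEcard sub /= -/(nzeros x) -/(nzeros z) hc.
move/eqP=> es; apply/ffunP=> i.
case: (hi i) => [xi|//]; rewrite xi.
have : i \in [set i | x i == 0] by rewrite inE xi.
by rewrite -es inE => /eqP ->.
Qed.

Theorem lemma4p7 (k n j : nat) (F : finFieldType)
  (hk : (0 < k)%N) (hn : (0 < n)%N) (hj : (j <= n)%N)
  (hF : #|F| = (3 ^ k)%N)
  (A : {set {ffun 'I_n -> F}})
  (hA0 : forall x, x \in A -> nzeros x = j)
  (hA : forall x y z, x \in A -> y \in A -> z \in A ->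
        x != y -> y != z -> x != z ->
        vmul x y + vmul y z + vmul z x != 0) :
  forall x y z, x \in A -> y \in A -> z \in A ->
    (Ppoly (3 ^ k)%N x y z != 0 <-> (x = y /\ y = z)).
Proof.
have h3 : (3%:R : F) = 0.
  by apply: pcharf0; apply: (card_finPcharP hF).
have q1 : (0 < 3 ^ k - 1)%N.
  by rewrite subn_gt0 -{1}(expn0 3) ltn_exp2l.
move=> x y z xA yA zA.
set s := fun i => x i * y i + y i * z i + z i * x i.
have Pe : (Ppoly (3 ^ k)%N x y z != 0) <-> (forall i, s i = 0).
  split.
    move=> hP i; apply/eqP; case: (eqVneq (s i) 0) => // si; exfalso.
    move: hP; rewrite /Ppoly (bigD1 i) //= -hF.
    rewrite (@fexp_nz _ _ si). rewrite subrr mul0r.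
    by rewrite eqxx.
  move=> hs; rewrite /Ppoly big1 ?oner_eq0 // => i _.
  by rewrite -/(s i) hs expr0n /= eqn0Ngt q1 subr0.
rewrite Pe; split; last first.
  move=> [exy eyz] i; rewrite /s -eyz -exy.
  transitivity ((x i * x i) * 3%:R); first ring.
  by rewrite h3 mulr0.
move=> hs.
have vz : vmul x y + vmul y z + vmul z x = 0.
  by apply/ffunP=> i; rewrite !ffunE -/(s i) hs.
have cx : nzeros x = nzeros y /\ nzeros y = nzeros z /\ nzeros x = nzeros z.
  by rewrite !hA0.
case: (eqVneq x y) => [exy|nxy].
  subst y; split=> //.
  apply: key_eq h3 _ (proj2 (proj2 cx)) => i.
  have := hs i; rewrite /s; move=> <-; ring.
case: (eqVneq y z) => [eyz|nyz].
  subst z; exfalso.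
  have e : y = x.
    apply: key_eq h3 _ (esym (proj1 cx)) => i.
    by have := hs i; rewrite /s => <-; ring.
  by rewrite e eqxx in nxy.
case: (eqVneq x z) => [exz|nxz].
  subst z; exfalso.
  have e : x = y.
    apply: key_eq h3 _ (proj1 cx) => i.
    by have := hs i; rewrite /s => <-; ring.
  by rewrite e eqxx in nxy.
by have := hA x y z xA yA zA nxy nyz nxz; rewrite vz eqxx.
Qed.
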